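(* Let $1\le k<n$, $m=\binom{n}{k}$, and let $\mathbf{A}=(A_1,\ldots,A_n)$ be an $n$-outcome POVM on $\mathbb{C}^d$. Then $\mathbf{A}$ is $k$-outcome-simulable if and only if there exist a probability vector $\vec p=(p_1,\ldots,p_m)$ and positive semidefinite operators $M_{ij}$ ($1\le i\le n$, $1\le j\le m$) such that $\sum_{j}M_{ij}=A_i$ for all $i$, $\sum_i M_{ij}=p_j\mathbb{I}$ for all $j$ (i.e. $\mathbf{M}$ is a joint measurement for the pair $\{\mathbf{A},(p_1\mathbb{I},\ldots,p_m\mathbb{I})\}$), and for every $j$ at least $n-k$ of the operators $M_{1j},\ldots,M_{nj}$ are zero.
   Context: A POVM on $\mathbb{C}^d$ with $n$ outcomes is a tuple $\mathbf{A}=(A_1,\ldots,A_n)$ of positive semidefinite operators with $\sum_a A_a=\mathbb{I}$ (some effects may be zero). Given a set $\mathcal{B}=\{\mathbf{B}^{(j)}\}_j$ of POVMs, a POVM $\mathbf{A}$ with $n$ outcomes is $\mathcal{B}$-simulable if there are a probability distribution $p(j)$ over (finitely many) elements of $\mathcal{B}$ and conditional probability distributions $q(i|j,i')$ (over $i\in\{1,\ldots,n\}$, for each $j$ and each outcome $i'$ of $\mathbf{B}^{(j)}$) such that $A_i=\sum_j p(j)\sum_{i'}q(i|j,i')B^{(j)}_{i'}$ for all $i$. $\mathbf{A}$ is $k$-outcome-simulable if it is $\mathcal{B}$-simulable where $\mathcal{B}$ is the set of all $k$-outcome POVMs on $\mathbb{C}^d$. *)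

(* Defs.v *)
(* Scalars: an arbitrary numClosedFieldType C (e.g. the
   complex numbers); matrices 'M[C]_d are operators on C^d. *)
From HB Require Import structures.
From mathcomp Require Import all_boot all_order all_algebra.
Set Implicit Arguments. Unset Strict Implicit. Unset Printing Implicit Defensive.
Import Order.TTheory GRing.Theory Num.Theory.
Local Open Scope ring_scope.

Definition adjmx (C : numClosedFieldType) (m n : nat) (A : 'M[C]_(m, n)) : 'M[C]_(n, m) :=
  map_mx Num.conj A^T.

Definition psd (C : numClosedFieldType) (d : nat) (A : 'M[C]_d) : Prop :=
  adjmx A = A /\ forall v : 'cV[C]_d, 0 <= (adjmx v *m A *m v) 0 0.

Definition is_povm (C : numClosedFieldType) (d n : nat) (A : 'I_n -> 'M[C]_d) : Prop :=
  (forall a, psd (A a)) /\ \sum_(a < n) A a = 1%:M.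

(* B-simulability, for a set Bset of k-outcome POVMs (given as a predicate).
   The finitely many POVMs used are indexed by 'I_N. *)
Definition simulable (C : numClosedFieldType) (d n k : nat)
  (Bset : ('I_k -> 'M[C]_d) -> Prop) (A : 'I_n -> 'M[C]_d) : Prop :=
  exists (N : nat) (p : 'I_N -> C) (B : 'I_N -> 'I_k -> 'M[C]_d)
         (q : 'I_N -> 'I_k -> 'I_n -> C),
    (forall j, Bset (B j)) /\
    (forall j, 0 <= p j) /\ \sum_(j < N) p j = 1 /\
    (forall j i' i, 0 <= q j i' i) /\
    (forall j i', \sum_(i < n) q j i' i = 1) /\
    (forall i, A i = \sum_(j < N) p j *: \sum_(i' < k) q j i' i *: B j i').

Definition k_outcome_simulable (C : numClosedFieldType) (d n k : nat)
  (A : 'I_n -> 'M[C]_d) : Prop :=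
  simulable (fun B : 'I_k -> 'M[C]_d => is_povm B) A.

(* Main.v *)
Require Import Defs.
From HB Require Import structures.
From mathcomp Require Import all_boot all_order all_algebra.
From mathcomp Require Import ring zify.
Import Order.TTheory GRing.Theory Num.Theory.
Local Open Scope ring_scope.
Set Implicit Arguments. Unset Strict Implicit. Unset Printing Implicit Defensive.

Section PSD.
Variable (C : numClosedFieldType) (d : nat).
Implicit Types (A B : 'M[C]_d).

Lemma adjmxD (m n : nat) (X Y : 'M[C]_(m, n)) : adjmx (X + Y) = adjmx X + adjmx Y.
Proof. by apply/matrixP => i j; rewrite !mxE rmorphD. Qed.

Lemma adjmxZ (m n : nat) c (X : 'M[C]_(m, n)) : adjmx (c *: X) = Num.conj c *: adjmx X.
Proof. by apply/matrixP => i j; rewrite !mxE rmorphM. Qed.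

Lemma adjmx0 (m n : nat) : adjmx (0 : 'M[C]_(m, n)) = 0.
Proof. by apply/matrixP => i j; rewrite !mxE rmorph0. Qed.

Lemma psd0 : psd (0 : 'M[C]_d).
Proof. by split; [exact: adjmx0 | move=> v; rewrite mulmx0 mul0mx mxE]. Qed.

Lemma psdD A B : psd A -> psd B -> psd (A + B).
Proof.
move=> [hA1 hA2] [hB1 hB2]; split; first by rewrite adjmxD hA1 hB1.
by move=> v; rewrite mulmxDr mulmxDl mxE addr_ge0.
Qed.

Lemma psdZ c A : 0 <= c -> psd A -> psd (c *: A).
Proof.
move=> hc [h1 h2]; split; first by rewrite adjmxZ h1 geC0_conj.
by move=> v; rewrite -scalemxAr -scalemxAl mxE mulr_ge0.
Qed.

Lemma psd_sum (I : finType) (P : pred I) (F : I -> 'M[C]_d) :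
  (forall i, P i -> psd (F i)) -> psd (\sum_(i | P i) F i).
Proof.
move=> h; apply: (big_ind (fun X => psd X)) => //; [exact: psd0 | exact: psdD].
Qed.

Lemma qf_delta A (a b : 'I_d) c :
  let v : 'cV[C]_d := delta_mx a 0 + c *: delta_mx b 0 in
  (adjmx v *m A *m v) 0 0
  = A a a + c * A a b + Num.conj c * A b a + Num.conj c * c * A b b.
Proof.
have ad : forall x : 'I_d, adjmx (delta_mx x 0 : 'cV[C]_d) = delta_mx 0 x.
  by move=> x; apply/matrixP => i j; rewrite !mxE rmorph_nat andbC.
have e : forall x y : 'I_d, ((delta_mx (0:'I_1) x : 'rV[C]_d) *m A *m delta_mx y (0:'I_1)) 0 0 = A x y.
  by move=> x y; rewrite -rowE -colE !mxE.
have e2 : forall x y : 'I_d, \sum_j ((delta_mx (0:'I_1) x : 'rV[C]_d) *m A) 0 j * delta_mx y (0:'I_1) j 0 = A x y.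
  by move=> x y; rewrite -(e x y) [in RHS]mxE.
rewrite /= adjmxD adjmxZ !ad !mulmxDl !mulmxDr -!scalemxAl -!scalemxAr !mxE !e2.
ring.
Qed.

Lemma qf0_mx0 A : (forall v : 'cV[C]_d, (adjmx v *m A *m v) 0 0 = 0) -> A = 0.
Proof.
move=> h.
have hd : forall a, A a a = 0.
  by move=> a; have := h (delta_mx a 0 + 0 *: delta_mx a 0); rewrite qf_delta rmorph0 !mul0r !addr0.
apply/matrixP => a b; rewrite mxE.
have h1 := h (delta_mx a 0 + 1 *: delta_mx b 0); rewrite qf_delta rmorph1 !hd in h1.
have h2 := h (delta_mx a 0 + 'i *: delta_mx b 0); rewrite qf_delta conjCi !hd in h2.
have e1 : A b a = - A a b.
  by apply/eqP; rewrite -addr_eq0 addrC; move: h1; rewrite !mul1r add0r addr0 => ->.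
move: h2; rewrite e1 => h2.
have : 'i * 2 * A a b = 0 by rewrite -h2; ring.
move/eqP; rewrite !mulf_eq0 (negbTE (neq0Ci C)) pnatr_eq0 /= => /eqP //.
Qed.

Lemma psd_sum0 (n : nat) (F : 'I_n -> 'M[C]_d) :
  (forall i, psd (F i)) -> \sum_(i < n) F i = 0 -> forall i, F i = 0.
Proof.
move=> hp hs i; apply: qf0_mx0 => v.
have : \sum_(i0 < n) (adjmx v *m F i0 *m v) 0 0 = 0.
  rewrite -summxE -mulmx_suml -mulmx_sumr hs.
  by rewrite mulmx0 mul0mx mxE.
move/psumr_eq0P => -> //.
by move=> j _; case: (hp j).
Qed.
End PSD.

Lemma marginal (R : comNzRingType) (k n : nat) (q : 'I_k -> 'I_n -> R)
  (hq : forall l, \sum_(i < n) q l i = 1) (l0 : 'I_k) (i0 : 'I_n) :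
  \sum_(f : {ffun 'I_k -> 'I_n}) (\prod_(l < k) q l (f l)) * (f l0 == i0)%:R = q l0 i0.
Proof.
pose F (l : 'I_k) (j : 'I_n) := if l == l0 then q l j * (j == i0)%:R else q l j.
transitivity (\sum_(f : {ffun 'I_k -> 'I_n}) \prod_(l < k) F l (f l)).
  apply: eq_bigr => f _; rewrite (bigD1 l0) //= [in RHS](bigD1 l0) //= /F; case: (l0 =P l0) => // _.
  rewrite mulrAC; congr (_ * _); apply: eq_bigr => l /negbTE ->//.
rewrite -bigA_distr_bigA (bigD1 l0) //= [X in _ * X]big1 ?mulr1.
  rewrite /F; case: (l0 =P l0) => // _; rewrite (bigD1 i0) //= eqxx mulr1 big1 ?addr0 //.
  by move=> j /negbTE ->; rewrite mulr0.
by move=> l /negbTE hl; rewrite /F hl hq.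
Qed.

Lemma sum_delta (R : nmodType) (I : finType) (a : I) (F : I -> R) :
  \sum_(i : I) (if i == a then F i else 0) = F a.
Proof. by rewrite -big_mkcond big_pred1_eq. Qed.

Lemma superset_ex (T : finType) (A : {set T}) (k : nat) :
  (#|A| <= k)%N -> (k <= #|T|)%N -> exists S : {set T}, (A \subset S) && (#|S| == k).
Proof.
move=> hA hk; move: {2}(k - #|A|)%N (erefl (k - #|A|)%N) => m.
elim: m A hA => [|m IH] A hA hm.
  by exists A; rewrite subxx /=; apply/eqP; lia.
have : ~~ ([set: T] \subset A).
  by apply/negP => h; have := subset_leq_card h; rewrite cardsT; lia.
case/subsetPn => x _ hx.
have := cardsU1 x A; rewrite hx /= => hc.
have [S /andP [h1 h2]] := IH (x |: A) ltac:(lia) ltac:(lia).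
exists S; rewrite h2 andbT; apply: subset_trans h1; exact: subsetUr.
Qed.

Unset Implicit Arguments. Set Strict Implicit. Set Printing Implicit Defensive.

Theorem proposition2 (C : numClosedFieldType) (d n k : nat)
  (hk1 : (1 <= k)%N) (hkn : (k < n)%N) (A : 'I_n -> 'M[C]_d) (hA : is_povm A) :
  k_outcome_simulable k A <->
  exists (p : 'I_('C(n, k)) -> C) (M : 'I_n -> 'I_('C(n, k)) -> 'M[C]_d),
    (forall j, 0 <= p j) /\ \sum_(j < 'C(n, k)) p j = 1 /\
    (forall i j, psd (M i j)) /\
    (forall i, \sum_(j < 'C(n, k)) M i j = A i) /\
    (forall j, \sum_(i < n) M i j = p j *: 1%:M) /\
    (forall j, (n - k <= #|[set i | M i j == (0 : 'M[C]_d)%R]|)%N).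
Proof.
have hn : (0 < n)%N by lia.
have psd1 : psd (1%:M : 'M[C]_d) by rewrite -hA.2; apply: psd_sum => i _; exact: hA.1.
case: k hk1 hkn => [//|k] _ hkn.
split.
- case=> N [p [B [q [hB [hp0 [hp1 [hq0 [hq1 hAe]]]]]]]].
  pose T := ('I_N * {ffun 'I_k.+1 -> 'I_n})%type.
  pose w (t : T) := p t.1 * \prod_(l < k.+1) q t.1 l (t.2 l).
  pose E (t : T) (i : 'I_n) := \sum_(l < k.+1 | t.2 l == i) B t.1 l.
  pose K := [set S : {set 'I_n} | #|S| == k.+1].
  have hK : #|K| = 'C(n, k.+1) by rewrite card_draws card_ord.
  have hsig : forall f : {ffun 'I_k.+1 -> 'I_n}, exists S : {set 'I_n},
      (f @: setT \subset S) && (S \in K).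
    move=> f; have [||S /andP[h1 h2]] := @superset_ex _ (f @: setT) k.+1.
    - by apply: leq_trans (leq_imset_card _ _) _; rewrite cardsT card_ord.
    - by rewrite card_ord; lia.
    by exists S; rewrite h1 inE h2.
  pose sig f := xchoose (hsig f).
  have sigP (f : {ffun 'I_k.+1 -> 'I_n}) : (f @: setT \subset sig f) && (sig f \in K) := xchooseP (hsig f).
  have S0K : sig [ffun => Ordinal hn] \in K by case/andP: (sigP [ffun => Ordinal hn]).
  pose idx (t : T) : 'I_('C(n, k.+1)) := cast_ord hK (enum_rank_in S0K (sig t.2)).
  pose Sj (j : 'I_('C(n, k.+1))) := enum_val (cast_ord (esym hK) j).
  have hidx t j : idx t = j -> Sj j = sig t.2.
    move=> <-; rewrite /Sj /idx cast_ordK enum_rankK_in //.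
    by case/andP: (sigP t.2).
  have hw0 t : 0 <= w t.
    by apply: mulr_ge0 => //; apply: prodr_ge0 => l _.
  have hEpsd t i : psd (E t i) by apply: psd_sum => l _; exact: (hB t.1).1.
  have hEsum t : \sum_(i < n) E t i = 1%:M.
    have := (hB t.1).2; rewrite (partition_big (fun l : 'I_k.+1 => t.2 l) xpredT) //=.
  have sumT (V : nmodType) (F : T -> V) : \sum_(t : T) F t = \sum_(j < N) \sum_f F (j, f).
    by rewrite pair_bigA; apply: eq_bigr => -[].
  have part (V : nmodType) (F : T -> V) :
      \sum_(j < 'C(n, k.+1)) \sum_(t | idx t == j) F t = \sum_(t : T) F t.
    by rewrite (partition_big idx xpredT).
  exists (fun j => \sum_(t | idx t == j) w t),
         (fun i j => \sum_(t | idx t == j) w t *: E t i).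
  split; first by move=> j; apply: sumr_ge0.
  split.
    rewrite part sumT -hp1; apply: eq_bigr => j _.
    rewrite /w /= -mulr_sumr -bigA_distr_bigA big1 ?mulr1 //.
  split; first by move=> i j; apply: psd_sum => t _; apply: psdZ.
  split.
    move=> i; rewrite part sumT hAe; apply: eq_bigr => j _.
    transitivity (\sum_(f : {ffun 'I_k.+1 -> 'I_n}) p j *: \sum_(l < k.+1)
        ((\prod_(l0 < k.+1) q j l0 (f l0)) * (f l == i)%:R) *: B j l).
      apply: eq_bigr => f _; rewrite /w /E /= -scalerA; congr (_ *: _).
      have e : forall l, ((\prod_(l0 < k.+1) q j l0 (f l0)) * (f l == i)%:R) *: B j l
          = if f l == i then (\prod_(l0 < k.+1) q j l0 (f l0)) *: B j l else 0.
        by move=> l; case: eqP => _; rewrite ?mulr1 ?mulr0 ?scale0r.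
      under [RHS]eq_bigr => l _ do rewrite e.
      by rewrite -big_mkcond scaler_sumr.
    rewrite -scaler_sumr exchange_big /=; congr (_ *: _); apply: eq_bigr => l _.
    by rewrite -scaler_suml marginal.
  split.
    move=> j; rewrite exchange_big /= scaler_suml; apply: eq_bigr => t _.
    by rewrite -scaler_sumr hEsum.
  move=> j.
  have hSK : Sj j \in K by apply: enum_valP.
  have hc := cardsC (Sj j); rewrite inE in hSK; move/eqP: hSK => hSK.
  rewrite card_ord in hc.
  apply: leq_trans (_ : #|~: Sj j| <= _)%N; first by lia.
  apply: subset_leq_card; apply/subsetP => i; rewrite !inE => hi.
  apply/eqP; apply: big1 => t /eqP ht; rewrite /E big_pred0 ?scaler0 // => l.
  apply/negP => /eqP hl; move: hi; rewrite (hidx _ _ ht).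
  case/andP: (sigP t.2) => /subsetP hs _; rewrite hs // -hl.
  by apply/imsetP; exists l.
- case=> p [M [hp0 [hp1 [hMpsd [hMA [hMp hz]]]]]].
  pose i0 := Ordinal hn.
  pose Z j := [set i | M i j != 0].
  have hZ j : (#|Z j| <= k.+1)%N.
    have := hz j; have := cardsC (Z j); rewrite card_ord.
    have -> : [set i | M i j == 0] = ~: Z j by apply/setP => i; rewrite !inE negbK.
    lia.
  pose g j (i : 'I_n) : 'I_k.+1 := inord (index i (enum (Z j))).
  pose h j (l : 'I_k.+1) := nth i0 (enum (Z j)) l.
  have hgh j i : i \in Z j -> h j (g j i) = i.
    move=> hi; have hs := hZ j; rewrite cardE in hs.
    rewrite /h /g inordK ?nth_index ?mem_enum //.
    by apply: leq_trans hs; rewrite index_mem mem_enum.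
  pose B j (l : 'I_k.+1) := if p j != 0 then (p j)^-1 *: \sum_(i | g j i == l) M i j
                           else (l == ord0)%:R *: (1%:M : 'M[C]_d).
  pose q j (l : 'I_k.+1) (i : 'I_n) : C := (i == h j l)%:R.
  exists 'C(n, k.+1), p, B, q.
  split.
    move=> j; split.
      move=> l; rewrite /B; case: ifP => hpj.
        by apply: psdZ; [rewrite invr_ge0 | apply: psd_sum].
      by apply: psdZ.
    rewrite /B; case hpj: (p j != 0) => /=.
      transitivity ((p j)^-1 *: \sum_(i < n) M i j).
        by rewrite [in RHS](partition_big (g j) xpredT) // scaler_sumr.
      by rewrite hMp scalerA mulVf ?scale1r.
    rewrite (bigD1 ord0) //= big1 ?addr0 ?scale1r //.
    by move=> l /negbTE ->; rewrite scale0r.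
  split; first by [].
  split; first by [].
  split; first by move=> *; rewrite ler0n.
  split.
    move=> j l; rewrite /q (bigD1 (h j l)) //= eqxx big1 ?addr0 //.
    by move=> i /negbTE ->.
  move=> i; rewrite -hMA; apply: eq_bigr => j _.
  case: (boolP (p j != 0)) => hpj; last first.
    move/negPn/eqP: hpj => hpj; rewrite hpj scale0r.
    have hs0 : \sum_(i0 < n) M i0 j = 0 by rewrite hMp hpj scale0r.
    exact: (@psd_sum0 C d n (fun i0 => M i0 j) (fun i0 => hMpsd i0 j) hs0 i).
  have -> : \sum_(l < k.+1) q j l i *: B j l =
      (p j)^-1 *: \sum_(l < k.+1) \sum_(i1 | g j i1 == l) (i == h j (g j i1))%:R *: M i1 j.
    rewrite scaler_sumr; apply: eq_bigr => l _; rewrite /B hpj /q.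
    rewrite scalerA mulrC -scalerA scaler_sumr; congr (_ *: _).
    by apply: eq_bigr => i1 /eqP ->.
  rewrite scalerA divff // scale1r.
  transitivity (\sum_(i1 < n) (i == h j (g j i1))%:R *: M i1 j); last first.
    by rewrite (partition_big (g j) xpredT).
  transitivity (\sum_(i1 < n) if i1 == i then M i1 j else 0).
    by rewrite sum_delta.
  apply: eq_bigr => i1 _.
  case: (boolP (M i1 j == 0)) => hm.
    by rewrite (eqP hm) scaler0; case: ifP.
  rewrite hgh ?inE // eq_sym; case: eqP => _; by rewrite ?scale1r ?scale0r.
Qed.
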